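(* For every $n\in\mathbb{N}=\{1,2,\dots\}$, the map $a\mapsto\frac{\Psi_{n+1}(a)}{\Psi_n(a)}$ is strictly increasing on $(0,\infty)$.
   Context: $\Psi_n(x)=\frac{\partial^{n+1}}{\partial x^{n+1}}\log\Gamma(x)$ is the polygamma function of order $n$, where $\Gamma$ is the gamma function. *)

(* Defs.v *)
From Stdlib Require Import Reals.
From Coquelicot Require Import Coquelicot.
Open Scope R_scope.

Definition Gamma (x : R) : R :=
  RInt_gen (fun t => Rpower t (x - 1) * exp (- t))
           (at_right 0) (Rbar_locally p_infty).

Definition polygamma (n : nat) (x : R) : R :=
  Derive_n (fun y => ln (Gamma y)) (S n) x.

(* Main.v *)
Require Import Defs.
From Stdlib Require Import Reals.
From Coquelicot Require Import Coquelicot.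
From Stdlib Require Import Lra Lia ZArith.
Open Scope R_scope.

Lemma ln_le_sub1 : forall u, 0 < u -> ln u <= u - 1.
Proof. intros u Hu. pose proof (exp_ineq1_le (ln u)). rewrite exp_ln in H; lra. Qed.

Lemma ln_le_lin : forall t k, 0 < t -> 0 < k -> ln t <= ln k + t / k - 1.
Proof.
  intros t k Ht Hk. pose proof (ln_le_sub1 (t / k)) as H.
  assert (0 < t / k) by (apply Rdiv_lt_0_compat; lra).
  specialize (H H0). unfold Rdiv in H. rewrite ln_mult, ln_Rinv in H; try lra.
  apply Rinv_0_lt_compat; lra.
Qed.

Lemma exp_convex : forall l u v, 0 <= l <= 1 ->
  exp (l * u + (1 - l) * v) <= l * exp u + (1 - l) * exp v.
Proof.
  intros l u v Hl. set (m := l * u + (1 - l) * v).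
  assert (Eu : exp u = exp m * exp (u - m)) by (rewrite <- exp_plus; f_equal; ring).
  assert (Ev : exp v = exp m * exp (v - m)) by (rewrite <- exp_plus; f_equal; ring).
  pose proof (exp_ineq1_le (u - m)). pose proof (exp_ineq1_le (v - m)).
  pose proof (exp_pos m).
  rewrite Eu, Ev.
  assert (l * (exp m * exp (u - m)) >= l * (exp m * (1 + (u - m)))).
  { apply Rle_ge, Rmult_le_compat_l; [lra|]. apply Rmult_le_compat_l; lra. }
  assert ((1 - l) * (exp m * exp (v - m)) >= (1 - l) * (exp m * (1 + (v - m)))).
  { apply Rle_ge, Rmult_le_compat_l; [lra|]. apply Rmult_le_compat_l; lra. }
  assert (l * (exp m * (1 + (u - m))) + (1 - l) * (exp m * (1 + (v - m))) = exp m).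
  { unfold m; ring. }
  lra.
Qed.

Definition gi (x t : R) := Rpower t (x - 1) * exp (- t).

Lemma gi_exp : forall x t, gi x t = exp ((x - 1) * ln t - t).
Proof. intros. unfold gi, Rpower, Rminus. rewrite <- exp_plus. reflexivity. Qed.

Lemma gi_pos : forall x t, 0 < gi x t.
Proof. intros. rewrite gi_exp. apply exp_pos. Qed.

Lemma gi_cont : forall x t, 0 < t -> continuous (gi x) t.
Proof.
  intros. apply (ex_derive_continuous (gi x)). unfold gi, Rpower. auto_derive. lra.
Qed.

Lemma flim_right0 : forall (F : R -> R) l,
  (forall eps, 0 < eps -> exists d, 0 < d /\ forall t, 0 < t < d -> Rabs (F t - l) < eps) ->
  filterlim F (at_right 0) (locally l).
Proof.
  intros F l H P [eps HP]. destruct (H eps (cond_pos eps)) as [d [Hd Ht]].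
  exists (mkposreal d Hd). intros t Hball Hpos. apply HP. apply (Ht t).
  split; auto. unfold ball in Hball; simpl in Hball; unfold AbsRing_ball, abs, minus, plus, opp in Hball; simpl in Hball.
  rewrite Ropp_0, Rplus_0_r, Rabs_right in Hball; lra.
Qed.

Lemma flim_pinf : forall (F : R -> R) l,
  (forall eps, 0 < eps -> exists M, forall t, M < t -> Rabs (F t - l) < eps) ->
  filterlim F (Rbar_locally p_infty) (locally l).
Proof.
  intros F l H P [eps HP]. destruct (H eps (cond_pos eps)) as [M HM].
  exists M. intros t Ht. apply HP. apply HM. auto.
Qed.

Lemma gen_ftc : forall (F f : R -> R) (la lb : R),
  (forall t, 0 < t -> is_derive F t (f t)) -> (forall t, 0 < t -> continuous f t) ->
  filterlim F (at_right 0) (locally la) -> filterlim F (Rbar_locally p_infty) (locally lb) ->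
  is_RInt_gen f (at_right 0) (Rbar_locally p_infty) (lb - la).
Proof.
  intros F f la lb HD HC Ha Hb.
  apply (is_RInt_gen_ext (Derive F)).
  - apply (Filter_prod _ _ _ (fun a => 0 < a) (fun b => 0 < b)).
    + exists (mkposreal 1 Rlt_0_1). intros; auto.
    + exists 0. auto.
    + intros a b Ha' Hb' t Ht. simpl in Ht. apply is_derive_unique, HD.
      pose proof (Rmin_glb_lt a b 0). unfold Rmin in *. destruct (Rle_dec a b); lra.
  - apply is_RInt_gen_Derive; auto.
    + apply (Filter_prod _ _ _ (fun a => 0 < a) (fun b => 0 < b)).
      * exists (mkposreal 1 Rlt_0_1). intros; auto.
      * exists 0. auto.
      * intros a b Ha' Hb' t Ht. simpl in Ht. exists (f t). apply HD.
        unfold Rmin in *. destruct (Rle_dec a b); lra.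
    + apply (Filter_prod _ _ _ (fun a => 0 < a) (fun b => 0 < b)).
      * exists (mkposreal 1 Rlt_0_1). intros; auto.
      * exists 0. auto.
      * intros a b Ha' Hb' t Ht. simpl in Ht.
        assert (0 < t) by (unfold Rmin in *; destruct (Rle_dec a b); lra).
        apply (continuous_ext_loc _ f).
        -- exists (mkposreal t H). intros u Hu. symmetry. apply is_derive_unique, HD.
           unfold ball in Hu; simpl in Hu; unfold AbsRing_ball, abs, minus, plus, opp in Hu; simpl in Hu.
           apply Rabs_def2 in Hu. lra.
        -- apply HC; auto.
Qed.

Lemma RInt_mono_ab : forall (f : R -> R) a0 b0 a b, (forall t, 0 < t -> continuous f t) -> (forall t, 0 < t -> 0 <= f t) ->
  0 < a -> a <= a0 -> a0 <= b0 -> b0 <= b -> RInt f a0 b0 <= RInt f a b.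
Proof.
  intros f a0 b0 a b HC HP Ha H1 H2 H3.
  assert (EX : forall u v, 0 < u -> u <= v -> ex_RInt f u v).
  { intros u v Hu Hv. apply (@ex_RInt_continuous R_CompleteNormedModule). intros z Hz. apply HC.
    rewrite Rmin_left in Hz; lra. }
  rewrite <- (RInt_Chasles f a a0 b) by (apply EX; lra).
  rewrite <- (RInt_Chasles f a0 b0 b) by (apply EX; lra).
  assert (0 <= RInt f a a0) by (apply RInt_ge_0; [lra| apply EX; lra| intros; apply HP; lra]).
  assert (0 <= RInt f b0 b) by (apply RInt_ge_0; [lra| apply EX; lra| intros; apply HP; lra]).
  change plus with Rplus. lra.
Qed.

Lemma improper_exists : forall (f : R -> R) (M : R),
  (forall t, 0 < t -> continuous f t) -> (forall t, 0 < t -> 0 <= f t) ->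
  (forall a b, 0 < a -> a <= b -> RInt f a b <= M) ->
  exists l, is_RInt_gen f (at_right 0) (Rbar_locally p_infty) l /\ forall a b, 0 < a -> a <= b -> RInt f a b <= l.
Proof.
  intros f M HC HP HB.
  set (E := fun v => exists a b, 0 < a <= b /\ v = RInt f a b).
  assert (Hb : bound E) by (exists M; intros v [a [b [Hab ->]]]; apply HB; lra).
  assert (Hne : exists v, E v) by (exists (RInt f 1 1), 1, 1; split; [lra|auto]).
  destruct (completeness E Hb Hne) as [l [Hub Hlub]].
  exists l. split.
  2: { intros a b Ha Hab. apply Hub. exists a, b. split; [lra|auto]. }
  intros P [eps HPe].
  assert (Hv : exists a0 b0, 0 < a0 <= b0 /\ l - eps < RInt f a0 b0).
  { apply Classical_Prop.NNPP. intro Hn.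
    assert (is_upper_bound E (l - eps)).
    { intros v [a [b [Hab ->]]]. apply Rnot_lt_le. intro. apply Hn. exists a, b; auto. }
    specialize (Hlub _ H). pose proof (cond_pos eps). lra. }
  destruct Hv as [a0 [b0 [Hab0 Hv]]].
  apply (Filter_prod _ _ _ (fun a => 0 < a < a0) (fun b => b0 < b)).
  - exists (mkposreal a0 (proj1 Hab0)). intros t Ht Hpos. split; auto.
    unfold ball in Ht; simpl in Ht; unfold AbsRing_ball, abs, minus, plus, opp in Ht; simpl in Ht.
    rewrite Ropp_0, Rplus_0_r, Rabs_right in Ht; lra.
  - exists b0. auto.
  - intros a b Ha Hb'. simpl. exists (RInt f a b). split.
    + apply (@RInt_correct R_CompleteNormedModule). apply (@ex_RInt_continuous R_CompleteNormedModule). intros z Hz. apply HC.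
      rewrite Rmin_left in Hz; lra.
    + apply HPe. unfold ball; simpl; unfold AbsRing_ball, abs, minus, plus, opp; simpl.
      assert (RInt f a b <= l) by (apply Hub; exists a, b; split; [lra|auto]).
      assert (RInt f a0 b0 <= RInt f a b) by (apply RInt_mono_ab; auto; lra).
      rewrite Rabs_left1; lra.
Qed.

Lemma ball_R : forall (c r y : R), ball c r y <-> Rabs (y - c) < r.
Proof. intros. unfold ball; simpl; unfold AbsRing_ball, abs, minus, plus, opp; simpl. tauto. Qed.

Lemma rpow_cont : forall y t, 0 < t -> continuous (fun t => Rpower t y) t.
Proof. intros. apply (ex_derive_continuous (fun t => Rpower t y)). unfold Rpower. auto_derive. lra. Qed.



Lemma gi_bound_tail : forall x t, 1 <= t ->
  gi x t <= exp (Rabs (x - 1) * ln (2 * (Rabs (x - 1) + 1))) * exp (- t / 2).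
Proof.
  intros x t Ht. rewrite gi_exp, <- exp_plus.
  set (k := 2 * (Rabs (x - 1) + 1)).
  assert (Hk : 0 < k) by (unfold k; pose proof (Rabs_pos (x-1)); lra).
  assert (Hl : ln t <= ln k + t / k - 1) by (apply ln_le_lin; lra).
  assert (Hl0 : 0 <= ln t) by (rewrite <- ln_1; apply ln_le; lra).
  assert (H1 : (x - 1) * ln t <= Rabs (x - 1) * ln t).
  { apply Rmult_le_compat_r; auto. apply Rle_abs. }
  assert (H2 : Rabs (x - 1) * ln t <= Rabs (x - 1) * (ln k + t / k)).
  { apply Rmult_le_compat_l; [apply Rabs_pos| lra]. }
  assert (H3 : Rabs (x - 1) * (t / k) <= t / 2).
  { unfold k. pose proof (Rabs_pos (x-1)). apply Rmult_le_reg_r with (2 * (Rabs (x - 1) + 1)); [lra|].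
    field_simplify; try lra. }
  destruct (Req_dec ((x - 1) * ln t - t) (Rabs (x - 1) * ln k + - t / 2)) as [E|E].
  - rewrite E; lra.
  - left. apply exp_increasing. lra.
Qed.

Lemma ex_RInt_pos : forall (f : R -> R) u v, (forall t, 0 < t -> continuous f t) -> 0 < u -> u <= v -> ex_RInt f u v.
Proof.
  intros f u v HC Hu Hv. apply (@ex_RInt_continuous R_CompleteNormedModule). intros z Hz. apply HC.
  rewrite Rmin_left in Hz; lra.
Qed.

Lemma gi_int_head : forall x a, 0 < x -> 0 < a -> a <= 1 -> RInt (gi x) a 1 <= / x.
Proof.
  intros x a Hx Ha Ha1.
  assert (HI : is_RInt (fun t => Rpower t (x - 1)) a 1 (Rpower 1 x / x - Rpower a x / x)).
  { apply (@is_RInt_derive R_CompleteNormedModule (fun t => Rpower t x / x)).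
    - intros t Ht. rewrite Rmin_left, Rmax_right in Ht by lra.
      apply is_derive_Reals.
      replace (Rpower t (x - 1)) with ((x * Rpower t (x - 1)) * / x) by (field; lra).
      apply derivable_pt_lim_scal_right. apply derivable_pt_lim_power. lra.
    - intros t Ht. rewrite Rmin_left, Rmax_right in Ht by lra. apply rpow_cont. lra. }
  apply Rle_trans with (RInt (fun t => Rpower t (x - 1)) a 1).
  - apply RInt_le; auto.
    + apply ex_RInt_pos; auto. apply gi_cont.
    + eexists; eauto.
    + intros t Ht. unfold gi. rewrite <- (Rmult_1_r (Rpower t (x-1))) at 2.
      apply Rmult_le_compat_l. unfold Rpower; left; apply exp_pos.
      rewrite <- exp_0. left. apply exp_increasing. lra.
  - rewrite (is_RInt_unique _ _ _ _ HI).
    assert (0 < Rpower a x) by (unfold Rpower; apply exp_pos).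
    unfold Rpower at 1. rewrite ln_1, Rmult_0_r, exp_0.
    assert (0 < / x) by (apply Rinv_0_lt_compat; lra).
    unfold Rdiv. nra.
Qed.

Lemma gi_int_tail : forall x b, 1 <= b ->
  RInt (gi x) 1 b <= 2 * exp (Rabs (x - 1) * ln (2 * (Rabs (x - 1) + 1))).
Proof.
  intros x b Hb. set (K := exp (Rabs (x - 1) * ln (2 * (Rabs (x - 1) + 1)))).
  assert (HK : 0 < K) by apply exp_pos.
  assert (HI : is_RInt (fun t => K * exp (- t / 2)) 1 b ((-2 * K * exp (- b / 2)) - (-2 * K * exp (- 1 / 2)))).
  { apply (@is_RInt_derive R_CompleteNormedModule (fun t => -2 * K * exp (- t / 2))).
    - intros t Ht. auto_derive; auto. unfold Rdiv. field.
    - intros t Ht. apply (ex_derive_continuous (fun t => K * exp (- t / 2))). auto_derive. auto. }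
  apply Rle_trans with (RInt (fun t => K * exp (- t / 2)) 1 b).
  - apply RInt_le; auto.
    + apply ex_RInt_pos; auto; try lra. apply gi_cont.
    + eexists; eauto.
    + intros t Ht. apply gi_bound_tail. lra.
  - rewrite (is_RInt_unique _ _ _ _ HI).
    pose proof (exp_pos (- b / 2)).
    assert (exp (- 1 / 2) <= 1) by (rewrite <- exp_0; left; apply exp_increasing; lra).
    nra.
Qed.

Lemma gi_int_bound : forall x a b, 0 < x -> 0 < a -> a <= b ->
  RInt (gi x) a b <= / x + 2 * exp (Rabs (x - 1) * ln (2 * (Rabs (x - 1) + 1))).
Proof.
  intros x a b Hx Ha Hab.
  apply Rle_trans with (RInt (gi x) (Rmin a 1) (Rmax b 1)).
  - apply RInt_mono_ab.
    + apply gi_cont.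
    + intros; left; apply gi_pos.
    + unfold Rmin; destruct (Rle_dec a 1); lra.
    + apply Rmin_l.
    + auto.
    + apply Rmax_l.
  - assert (0 < Rmin a 1) by (unfold Rmin; destruct (Rle_dec a 1); lra).
    rewrite <- (RInt_Chasles (gi x) (Rmin a 1) 1 (Rmax b 1)).
    + change plus with Rplus. apply Rplus_le_compat.
      * apply gi_int_head; auto. apply Rmin_r.
      * apply gi_int_tail. apply Rmax_r.
    + apply ex_RInt_pos; auto. apply gi_cont. apply Rmin_r.
    + apply ex_RInt_pos; try lra. apply gi_cont. apply Rmax_r.
Qed.

Lemma gamma_is_int : forall x, 0 < x ->
  is_RInt_gen (gi x) (at_right 0) (Rbar_locally p_infty) (Gamma x).
Proof.
  intros x Hx.
  destruct (improper_exists (gi x) _ (gi_cont x) (fun t _ => Rlt_le _ _ (gi_pos x t))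
     (fun a b Ha Hab => gi_int_bound x a b Hx Ha Hab)) as [l [Hl _]].
  unfold Gamma. fold (gi x).
  replace (RInt_gen (gi x) (at_right 0) (Rbar_locally p_infty)) with l; auto.
  symmetry. apply is_RInt_gen_unique; auto.
Qed.

Lemma gamma_pos : forall x, 0 < x -> 0 < Gamma x.
Proof.
  intros x Hx.
  destruct (improper_exists (gi x) _ (gi_cont x) (fun t _ => Rlt_le _ _ (gi_pos x t))
     (fun a b Ha Hab => gi_int_bound x a b Hx Ha Hab)) as [l [Hl Hb]].
  unfold Gamma. fold (gi x).
  replace (RInt_gen (gi x) (at_right 0) (Rbar_locally p_infty)) with l.
  2: { symmetry. apply is_RInt_gen_unique; auto. }
  apply Rlt_le_trans with (RInt (gi x) 1 2).
  - apply RInt_gt_0; try lra. intros; apply gi_pos. intros; apply gi_cont; lra.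
  - apply Hb; lra.
Qed.

Lemma rpow_m1 : forall x t, 0 < t -> Rpower t (x - 1) = exp (x * ln t) / t.
Proof. intros. unfold Rpower. replace ((x-1) * ln t) with (x * ln t + - ln t) by ring.
rewrite exp_plus, exp_Ropp, exp_ln; auto. Qed.

Lemma lim_F0 : forall x, 0 < x -> filterlim (fun t => - exp (x * ln t - t)) (at_right 0) (locally 0).
Proof.
  intros x Hx. apply flim_right0. intros eps Heps.
  exists (exp (ln eps / x)). split; [apply exp_pos|]. intros t [Ht1 Ht2].
  rewrite Rminus_0_r, Rabs_Ropp, Rabs_right by (left; apply exp_pos).
  apply ln_increasing in Ht2; auto. rewrite ln_exp in Ht2.
  assert (x * ln t < ln eps).
  { apply Rmult_lt_compat_l with (r := x) in Ht2; auto.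
    replace (x * (ln eps / x)) with (ln eps) in Ht2 by (field; lra). auto. }
  rewrite <- (exp_ln eps) by auto. apply exp_increasing. lra.
Qed.

Lemma lim_Finf : forall x, 0 < x -> filterlim (fun t => - exp (x * ln t - t)) (Rbar_locally p_infty) (locally 0).
Proof.
  intros x Hx. apply flim_pinf. intros eps Heps.
  exists (Rmax 1 (2 * (x * ln (2 * x) - ln eps))). intros t Ht.
  assert (H1 : 1 < t) by (eapply Rle_lt_trans; [apply Rmax_l| eauto]).
  assert (H2 : 2 * (x * ln (2 * x) - ln eps) < t) by (eapply Rle_lt_trans; [apply Rmax_r| eauto]).
  rewrite Rminus_0_r, Rabs_Ropp, Rabs_right by (left; apply exp_pos).
  assert (Hl : ln t <= ln (2 * x) + t / (2 * x) - 1) by (apply ln_le_lin; lra).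
  assert (x * ln t <= x * ln (2 * x) + t / 2 - x).
  { apply Rmult_le_compat_l with (r := x) in Hl; [|lra].
    replace (x * (ln (2 * x) + t / (2 * x) - 1)) with (x * ln (2 * x) + t / 2 - x) in Hl by (field; lra). auto. }
  rewrite <- (exp_ln eps) by auto. apply exp_increasing. lra.
Qed.

Lemma gamma_succ : forall x, 0 < x -> Gamma (x + 1) = x * Gamma x.
Proof.
  intros x Hx.
  assert (H1 := gen_ftc (fun t => - exp (x * ln t - t)) (fun t => exp (x * ln t - t) - x * gi x t) 0 0).
  assert (H2 : is_RInt_gen (fun t => exp (x * ln t - t) - x * gi x t) (at_right 0) (Rbar_locally p_infty) (0 - 0)).
  { apply H1.
    - intros t Ht. unfold gi. auto_derive. lra. rewrite rpow_m1 by auto. unfold Rminus. rewrite !exp_plus. field. lra.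
    - intros t Ht. apply (ex_derive_continuous (fun t => exp (x * ln t - t) - x * gi x t)).
      unfold gi, Rpower. auto_derive. lra.
    - apply lim_F0; auto.
    - apply lim_Finf; auto. }
  assert (H3 := is_RInt_gen_scal (gi x) x (Gamma x) (gamma_is_int x Hx)).
  assert (H4 := is_RInt_gen_plus _ _ _ _ H2 H3).
  assert (H5 : is_RInt_gen (gi (x + 1)) (at_right 0) (Rbar_locally p_infty) (x * Gamma x)).
  { replace (x * Gamma x) with (plus (0 - 0) (scal x (Gamma x))).
    2: { change plus with Rplus. change scal with Rmult. simpl. change mult with Rmult. ring. }
    eapply is_RInt_gen_ext; [ | exact H4].
    apply (Filter_prod _ _ _ (fun a => 0 < a) (fun b => 0 < b)).
    + exists (mkposreal 1 Rlt_0_1). intros; auto.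
    + exists 0. auto.
    + intros a b Ha Hb t Ht. simpl in Ht.
      assert (0 < t) by (unfold Rmin in *; destruct (Rle_dec a b); lra).
      change plus with Rplus. change scal with Rmult. simpl. change mult with Rmult.
      rewrite !gi_exp. replace (x + 1 - 1) with x by ring. ring. }
  unfold Gamma at 1. fold (gi (x + 1)). apply is_RInt_gen_unique; auto.
Qed.

Lemma gamma_logconvex : forall x y l, 0 < x -> 0 < y -> 0 <= l <= 1 ->
  ln (Gamma (l * x + (1 - l) * y)) <= l * ln (Gamma x) + (1 - l) * ln (Gamma y).
Proof.
  intros x y l Hx Hy Hl.
  set (z := l * x + (1 - l) * y).
  assert (Hz : 0 < z) by (unfold z; nra).
  set (A := Gamma x). set (B := Gamma y).
  assert (HA : 0 < A) by (apply gamma_pos; auto).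
  assert (HB : 0 < B) by (apply gamma_pos; auto).
  set (E := exp (l * ln A + (1 - l) * ln B)).
  assert (HE : 0 < E) by apply exp_pos.
  set (c1 := E * l / A). set (c2 := E * (1 - l) / B).
  assert (Hg : is_RInt_gen (fun t => plus (scal c1 (gi x t)) (scal c2 (gi y t))) (at_right 0) (Rbar_locally p_infty)
            (plus (scal c1 A) (scal c2 B))).
  { apply (is_RInt_gen_plus (fun t => scal c1 (gi x t)) (fun t => scal c2 (gi y t))).
    exact (is_RInt_gen_scal (gi x) c1 A (gamma_is_int x Hx)).
    exact (is_RInt_gen_scal (gi y) c2 B (gamma_is_int y Hy)). }
  assert (Hle : norm (Gamma z) <= plus (scal c1 A) (scal c2 B)).
  { refine (@RInt_gen_norm R_CompleteNormedModule (at_right 0) (Rbar_locally p_infty) _ _ (gi z) _ (Gamma z) _ _ _ (gamma_is_int z Hz) Hg).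
    - apply (Filter_prod _ _ _ (fun a => 0 < a < 1) (fun b => 1 < b)).
      + exists (mkposreal 1 Rlt_0_1). intros t Ht Hp. split; auto. unfold ball in Ht; simpl in Ht; unfold AbsRing_ball, abs, minus, plus, opp in Ht; simpl in Ht.
        rewrite Ropp_0, Rplus_0_r, Rabs_right in Ht; lra.
      + exists 1. auto.
      + intros a b Ha Hb. simpl. lra.
    - apply (Filter_prod _ _ _ (fun a => 0 < a < 1) (fun b => 1 < b)).
      + exists (mkposreal 1 Rlt_0_1). intros t Ht Hp. split; auto. unfold ball in Ht; simpl in Ht; unfold AbsRing_ball, abs, minus, plus, opp in Ht; simpl in Ht.
        rewrite Ropp_0, Rplus_0_r, Rabs_right in Ht; lra.
      + exists 1. auto.
      + intros a b Ha Hb t Ht. simpl in Ht.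
        assert (Ht0 : 0 < t) by lra.
        change norm with Rabs; simpl. change plus with Rplus. change scal with Rmult. simpl. change mult with Rmult.
        rewrite Rabs_right by (left; apply gi_pos).
        rewrite !gi_exp.
        set (U := (x - 1) * ln t - t). set (V := (y - 1) * ln t - t).
        replace ((z - 1) * ln t - t) with ((l * ln A + (1 - l) * ln B) + (l * (U - ln A) + (1 - l) * (V - ln B)))
          by (unfold U, V, z; ring).
        rewrite exp_plus. fold E.
        pose proof (exp_convex l (U - ln A) (V - ln B) Hl).
        assert (EU : exp (U - ln A) = exp U * / A) by (unfold Rminus; rewrite exp_plus, exp_Ropp, exp_ln; auto).
        assert (EV : exp (V - ln B) = exp V * / B) by (unfold Rminus; rewrite exp_plus, exp_Ropp, exp_ln; auto).
        rewrite EU, EV in H.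
        unfold c1, c2.
        apply Rle_trans with (E * (l * (exp U * / A) + (1 - l) * (exp V * / B))).
        * apply Rmult_le_compat_l; lra.
        * right. field. lra. }
  change norm with Rabs in Hle; simpl in Hle. change plus with Rplus in Hle. change scal with Rmult in Hle.
  simpl in Hle. change mult with Rmult in Hle.
  replace (c1 * A + c2 * B) with E in Hle by (unfold c1, c2; field; lra).
  pose proof (gamma_pos z Hz).
  rewrite Rabs_right in Hle by lra.
  unfold E in Hle. apply ln_le in Hle; auto. rewrite ln_exp in Hle. auto.
Qed.

Lemma series_cv : forall a, ex_series a -> Un_cv (fun n => sum_f_R0 a n) (Series a).
Proof.
  intros a Ha. apply is_lim_seq_Reals. apply (is_lim_seq_ext (sum_n a)).
  - intros; apply sum_n_Reals.
  - apply (Series_correct a Ha).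
Qed.

Lemma series_abs_le : forall a b, (forall k, Rabs (a k) <= b k) -> ex_series b -> Rabs (Series a) <= Series b.
Proof.
  intros a b Hab Hb.
  apply Rle_trans with (Series (fun k => Rabs (a k))).
  - apply Series_Rabs. apply (@ex_series_le R_AbsRing R_CompleteNormedModule _ b); auto. intros; rewrite Rabs_Rabsolu; apply Hab.
  - apply Series_le; auto. intros; split; [apply Rabs_pos| apply Hab].
Qed.

Lemma mtest : forall (g : nat -> R -> R) (M : nat -> R) c r,
  (forall k y, Boule c r y -> Rabs (g k y) <= M k) -> ex_series M ->
  CVU (fun n y => sum_f_R0 (fun k => g k y) n) (fun y => Series (fun k => g k y)) c r.
Proof.
  intros g M c r Hb HM eps Heps.
  destruct (series_cv M HM eps Heps) as [N HN].
  exists N. intros n y Hn Hy.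
  assert (Hex : ex_series (fun k => g k y)).
  { apply (@ex_series_le R_AbsRing R_CompleteNormedModule _ M); auto. }
  rewrite (Series_incr_n _ (S n)) by (auto; lia). simpl pred.
  replace (sum_f_R0 (fun k : nat => g k y) n + Series (fun k : nat => g (S n + k)%nat y) -
     sum_f_R0 (fun k : nat => g k y) n) with (Series (fun k : nat => g (S n + k)%nat y)) by ring.
  eapply Rle_lt_trans.
  - apply (series_abs_le _ (fun k => M (S n + k)%nat)).
    + intros; apply Hb; auto.
    + apply (ex_series_incr_n M (S n)); auto.
  - specialize (HN n Hn). unfold R_dist in HN.
    rewrite (Series_incr_n M (S n)) in HN by (auto; lia). simpl pred in HN.
    replace (sum_f_R0 M n - (sum_f_R0 M n + Series (fun k : nat => M (S n + k)%nat)))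
      with (- Series (fun k : nat => M (S n + k)%nat)) in HN by ring.
    rewrite Rabs_Ropp in HN. eapply Rle_lt_trans; [apply Rle_abs| auto].
Qed.

Lemma ex_inv_sq : ex_series (fun k => / (INR k + 1) ^ 2).
Proof.
  assert (Ht : is_series (fun k => / (INR k + 1) - / (INR k + 1 + 1)) 1).
  { apply is_series_Reals. intros eps Heps.
    destruct (archimed (/ eps)) as [H1 _].
    assert (0 <= up (/ eps))%Z.
    { apply le_IZR. pose proof (Rinv_0_lt_compat _ Heps). simpl. lra. }
    exists (Z.to_nat (up (/ eps))). intros n Hn.
    assert (Hs : forall m, sum_f_R0 (fun k => / (INR k + 1) - / (INR k + 1 + 1)) m = 1 - / (INR m + 1 + 1)).
    { induction m. cbn [sum_f_R0 INR]. field. cbn [sum_f_R0]. rewrite IHm. rewrite S_INR. field.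
      pose proof (pos_INR m). lra. }
    rewrite Hs. unfold R_dist.
    pose proof (pos_INR n).
    replace (1 - / (INR n + 1 + 1) - 1) with (- / (INR n + 1 + 1)) by ring.
    rewrite Rabs_Ropp, Rabs_right by (left; apply Rinv_0_lt_compat; lra).
    apply le_INR in Hn. rewrite INR_IZR_INZ, Z2Nat.id in Hn by auto.
    rewrite <- (Rinv_inv eps). apply Rinv_lt_contravar.
    - apply Rmult_lt_0_compat; [apply Rinv_0_lt_compat|]; lra.
    - lra. }
  apply (@ex_series_le R_AbsRing R_CompleteNormedModule _ (fun k => 2 * (/ (INR k + 1) - / (INR k + 1 + 1)))).
  - intros k. change norm with Rabs. simpl. pose proof (pos_INR k).
    rewrite Rabs_right by (left; apply Rinv_0_lt_compat; nra).
    set (a := INR k + 1). assert (1 <= a) by (unfold a; lra).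
    replace (2 * (/ a - / (a + 1))) with (/ (a * (a + 1) / 2)) by (field; lra).
    apply Rinv_le_contravar. nra. simpl; nra.
  - exists (2 * 1). apply (is_series_scal_l 2 _ _ Ht).
Qed.

Lemma ex_C_inv_sq : forall C, ex_series (fun k => C / (INR k + 1) ^ 2).
Proof. intros. destruct ex_inv_sq as [l Hl]. exists (C * l). apply (is_series_scal_l C _ _ Hl). Qed.

Lemma sum_derive : forall (h h' : nat -> R -> R) y n,
  (forall k, is_derive (h k) y (h' k y)) ->
  is_derive (fun y => sum_f_R0 (fun k => h k y) n) y (sum_f_R0 (fun k => h' k y) n).
Proof.
  intros h h' y n H. induction n.
  - simpl. apply H.
  - simpl. apply (is_derive_plus (fun y => sum_f_R0 (fun k => h k y) n) (h (S n))); auto.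
Qed.

Lemma td : forall (h h' : nat -> R -> R) x M, 0 < x ->
  (forall k y, 0 < y -> is_derive (h k) y (h' k y)) ->
  (forall y, 0 < y -> ex_series (fun k => h k y)) ->
  ex_series M -> (forall k y, x / 2 < y -> Rabs (h' k y) <= M k) ->
  is_derive (fun y => Series (fun k => h k y)) x (Series (fun k => h' k x)).
Proof.
  intros h h' x M Hx Hd Hs HM Hb.
  apply is_derive_Reals.
  set (d := mkposreal (x / 2) ltac:(lra)).
  assert (HB : forall y, Boule x d y -> x / 2 < y).
  { intros y Hy. unfold Boule in Hy; simpl in Hy. apply Rabs_def2 in Hy. lra. }
  apply (CVU_derivable (fun n y => sum_f_R0 (fun k => h k y) n) (fun n y => sum_f_R0 (fun k => h' k y) n)
     (fun y => Series (fun k => h k y)) (fun y => Series (fun k => h' k y)) x d).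
  - apply (mtest h' M). intros k y Hy; apply Hb, HB; auto. auto.
  - intros y Hy. apply series_cv. apply Hs. specialize (HB y Hy). lra.
  - intros n y Hy. apply is_derive_Reals. apply sum_derive. intros k; apply Hd. specialize (HB y Hy). lra.
  - apply Boule_center.
Qed.

Definition lG y := ln (Gamma y).

Lemma lG_succ : forall y, 0 < y -> lG (y + 1) = ln y + lG y.
Proof. intros. unfold lG. rewrite gamma_succ, ln_mult; auto. apply gamma_pos; auto. Qed.

Lemma lG_shift : forall y n, 0 < y -> lG (y + INR n + 1) = lG y + sum_f_R0 (fun k => ln (y + INR k)) n.
Proof.
  intros y n Hy. induction n.
  - cbn [sum_f_R0]. replace (y + INR 0 + 1) with (y + 1) by (simpl; ring). replace (y + INR 0) with y by (simpl; ring). rewrite lG_succ by auto. ring.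
  - cbn [sum_f_R0]. rewrite S_INR. pose proof (pos_INR n).
    replace (y + (INR n + 1) + 1) with ((y + INR n + 1) + 1) by ring.
    rewrite lG_succ, IHn by lra. replace (y + (INR n + 1)) with (y + INR n + 1) by ring. ring.
Qed.

Lemma slope : forall p q r, 0 < p -> p < q -> q < r ->
  (lG q - lG p) * (r - q) <= (lG r - lG q) * (q - p).
Proof.
  intros p q r Hp Hpq Hqr.
  set (l := (r - q) / (r - p)).
  assert (Hl : 0 <= l <= 1).
  { unfold l. split. apply Rdiv_le_0_compat; lra.
    apply Rmult_le_reg_r with (r - p). lra. unfold Rdiv. rewrite Rmult_assoc, Rinv_l; lra. }
  pose proof (gamma_logconvex p r l Hp ltac:(lra) Hl) as H.
  replace (l * p + (1 - l) * r) with q in H by (unfold l; field; lra).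
  fold (lG q) (lG p) (lG r) in H.
  assert (H2 : (r - p) * lG q <= (r - q) * lG p + (q - p) * lG r).
  { apply Rmult_le_compat_l with (r := r - p) in H; [|lra].
    replace ((r - p) * (l * lG p + (1 - l) * lG r)) with ((r - q) * lG p + (q - p) * lG r) in H
      by (unfold l; field; lra). auto. }
  nra.
Qed.

Lemma ln_diff_le : forall a b, 0 < a -> 0 < b -> ln a - ln b <= a / b - 1.
Proof. intros. pose proof (ln_le_lin a b H H0). lra. Qed.

Definition fn (n : nat) (y : R) :=
  y * ln (INR n + 1) + lG (INR n + 1 + 1) - sum_f_R0 (fun k => ln (y + INR k)) (S n).

Lemma fn_bounds : forall n y, 0 < y -> 0 <= lG y - fn n y <= y * (1 + y) / (INR n + 1).
Proof.
  intros n y Hy. set (N := INR n + 1). assert (HN : 1 <= N) by (unfold N; pose proof (pos_INR n); lra).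
  assert (E1 : lG (N + 1 + y) = lG y + sum_f_R0 (fun k => ln (y + INR k)) (S n)).
  { rewrite <- lG_shift by auto. rewrite S_INR. f_equal. unfold N. ring. }
  assert (E2 : lG y - fn n y = lG (N + 1 + y) - lG (N + 1) - y * ln N).
  { unfold fn. fold N. rewrite E1. ring. }
  rewrite E2.
  pose proof (slope N (N + 1) (N + 1 + y) ltac:(lra) ltac:(lra) ltac:(lra)) as S1.
  pose proof (slope (N + 1) (N + 1 + y) (N + 1 + y + 1) ltac:(lra) ltac:(lra) ltac:(lra)) as S2.
  assert (EN : lG (N + 1) = ln N + lG N) by (apply lG_succ; lra).
  assert (EM : lG (N + 1 + y + 1) = ln (N + 1 + y) + lG (N + 1 + y)) by (apply lG_succ; lra).
  replace (N + 1 + y + 1 - (N + 1 + y)) with 1 in S2 by ring.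
  replace (N + 1 + y - (N + 1)) with y in S2 by ring.
  replace (N + 1 + y - (N + 1)) with y in S1 by ring.
  replace (N + 1 - N) with 1 in S1 by ring.
  pose proof (ln_diff_le (N + 1 + y) N ltac:(lra) ltac:(lra)) as L.
  replace ((N + 1 + y) / N - 1) with ((1 + y) / N) in L by (field; lra).
  split.
  - nra.
  - assert (y * (ln (N + 1 + y) - ln N) <= y * ((1 + y) / N)) by (apply Rmult_le_compat_l; lra).
    unfold Rdiv in *. nra.
Qed.

Lemma fn_cv : forall y, 0 < y -> Un_cv (fun n => fn n y) (lG y).
Proof.
  intros y Hy eps Heps.
  destruct (archimed (y * (1 + y) / eps)) as [H1 _].
  assert (0 <= up (y * (1 + y) / eps))%Z.
  { apply le_IZR. assert (0 < y * (1 + y) / eps) by (apply Rdiv_lt_0_compat; nra). simpl. lra. }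
  exists (Z.to_nat (up (y * (1 + y) / eps))). intros n Hn.
  apply le_INR in Hn. rewrite INR_IZR_INZ, Z2Nat.id in Hn by auto.
  pose proof (fn_bounds n y Hy). unfold R_dist.
  rewrite Rabs_minus_sym, Rabs_right by lra.
  eapply Rle_lt_trans; [apply H0|].
  pose proof (pos_INR n).
  apply Rmult_lt_reg_r with (INR n + 1); [lra|]. unfold Rdiv. rewrite Rmult_assoc, Rinv_l, Rmult_1_r by lra.
  assert (Hq : y * (1 + y) < eps * (INR n + 1)).
  { replace (y * (1 + y)) with (y * (1 + y) / eps * eps) by (field; lra). nra. }
  lra.
Qed.

Lemma fn_derive : forall n y, 0 < y ->
  is_derive (fn n) y (ln (INR n + 1) - sum_f_R0 (fun k => / (y + INR k)) (S n)).
Proof.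
  intros n y Hy. unfold fn.
  apply (is_derive_minus (fun y => y * ln (INR n + 1) + lG (INR n + 1 + 1)) (fun y => sum_f_R0 (fun k => ln (y + INR k)) (S n))).
  - auto_derive; auto. ring.
  - apply (sum_derive (fun k y => ln (y + INR k)) (fun k y => / (y + INR k))). intros k.
    pose proof (pos_INR k). auto_derive. lra. field. lra.
Qed.

Definition dseq (n : nat) := ln (INR n + 1) - sum_f_R0 (fun k => / (INR k + 1)) (S n).

Lemma dseq_growing : Un_growing dseq.
Proof.
  intros n. unfold dseq. cbn [sum_f_R0]. rewrite !S_INR. pose proof (pos_INR n).
  pose proof (ln_le_lin (INR n + 1) (INR n + 1 + 1) ltac:(lra) ltac:(lra)).
  assert ((INR n + 1) / (INR n + 1 + 1) - 1 = - / (INR n + 1 + 1)) by (field; lra).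
  assert (/ (INR n + 1 + 1 + 1) <= / (INR n + 1 + 1)) by (apply Rinv_le_contravar; lra).
  lra.
Qed.

Lemma harm_ge_ln : forall n, ln (INR n + 1 + 1) <= sum_f_R0 (fun k => / (INR k + 1)) n.
Proof.
  induction n.
  - cbn [sum_f_R0]. replace (INR 0 + 1 + 1) with 2 by (simpl; ring). replace (/ (INR 0 + 1)) with 1 by (simpl; field).
    pose proof (ln_le_sub1 2). lra.
  - cbn [sum_f_R0]. rewrite S_INR. pose proof (pos_INR n).
    pose proof (ln_diff_le (INR n + 1 + 1 + 1) (INR n + 1 + 1) ltac:(lra) ltac:(lra)).
    assert ((INR n + 1 + 1 + 1) / (INR n + 1 + 1) - 1 = / (INR n + 1 + 1)) by (field; lra).
    lra.
Qed.

Lemma dseq_ub : has_ub dseq.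
Proof.
  exists 0. intros v [n ->]. unfold dseq. cbn [sum_f_R0].
  pose proof (harm_ge_ln n). pose proof (pos_INR n).
  assert (ln (INR n + 1) <= ln (INR n + 1 + 1)) by (apply ln_le; lra).
  rewrite S_INR. assert (0 < / (INR n + 1 + 1)) by (apply Rinv_0_lt_compat; lra). lra.
Qed.

Definition cst : R := proj1_sig (growing_cv dseq dseq_growing dseq_ub).
Lemma cst_cv : Un_cv dseq cst.
Proof. unfold cst. destruct (growing_cv dseq dseq_growing dseq_ub). auto. Qed.

Definition uu (k : nat) (y : R) := / (y + INR k) - / (INR k + 1).

Lemma inv_lin_bound : forall d y k, 0 < d -> d <= y -> Rmin d 1 * (INR k + 1) <= y + INR k.
Proof.
  intros. pose proof (pos_INR k). pose proof (Rmin_l d 1). pose proof (Rmin_r d 1).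
  assert (Rmin d 1 * INR k <= INR k) by nra. lra.
Qed.

Lemma uu_bound : forall d R0 y k, 0 < d -> d <= y <= R0 ->
  Rabs (uu k y) <= ((1 + R0) / (Rmin d 1 * Rmin d 1)) / (INR k + 1) ^ 2.
Proof.
  intros d R0 y k Hd Hy. pose proof (pos_INR k).
  pose proof (inv_lin_bound d y k Hd (proj1 Hy)).
  set (m := Rmin d 1) in *. assert (Hm : 0 < m) by (unfold m, Rmin; destruct (Rle_dec d 1); lra).
  assert (Hm1 : m <= 1) by apply Rmin_r.
  unfold uu. replace (/ (y + INR k) - / (INR k + 1)) with ((1 - y) * / ((y + INR k) * (INR k + 1))) by (field; lra).
  rewrite Rabs_mult, (Rabs_right (/ _)) by (left; apply Rinv_0_lt_compat; nra).
  replace ((1 + R0) / (m * m) / (INR k + 1) ^ 2) with ((1 + R0) * / (m * (INR k + 1) * (m * (INR k + 1)))) by (field; lra).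
  apply Rmult_le_compat.
  - apply Rabs_pos.
  - left; apply Rinv_0_lt_compat; nra.
  - unfold Rabs; destruct (Rcase_abs (1 - y)); lra.
  - apply Rinv_le_contravar. nra. apply Rmult_le_compat; nra.
Qed.

Lemma inv_pow_bound : forall d y k s, 0 < d -> d <= y -> (2 <= s)%nat ->
  / (y + INR k) ^ s <= / (Rmin d 1) ^ s / (INR k + 1) ^ 2.
Proof.
  intros d y k s Hd Hy Hs. pose proof (pos_INR k).
  pose proof (inv_lin_bound d y k Hd Hy).
  set (m := Rmin d 1) in *. assert (Hm : 0 < m) by (unfold m, Rmin; destruct (Rle_dec d 1); lra).
  assert (H1 : (m * (INR k + 1)) ^ s <= (y + INR k) ^ s) by (apply pow_incr; nra).
  assert (H2 : (INR k + 1) ^ 2 <= (INR k + 1) ^ s) by (apply Rle_pow; lra || lia).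
  rewrite Rpow_mult_distr in H1.
  assert (0 < m ^ s) by (apply pow_lt; auto).
  assert (0 < (INR k + 1) ^ 2) by (apply pow_lt; lra).
  unfold Rdiv. rewrite <- Rinv_mult.
  apply Rinv_le_contravar. nra.
  apply Rle_trans with (m ^ s * (INR k + 1) ^ s); auto. apply Rmult_le_compat_l; lra.
Qed.

Lemma ex_uu : forall y, 0 < y -> ex_series (fun k => uu k y).
Proof.
  intros y Hy. apply (@ex_series_le R_AbsRing R_CompleteNormedModule _ (fun k => ((1 + y) / (Rmin y 1 * Rmin y 1)) / (INR k + 1) ^ 2)); [|apply ex_C_inv_sq].
  intros k. apply (uu_bound y y); lra.
Qed.

Lemma ex_invpow : forall y s, 0 < y -> (2 <= s)%nat -> ex_series (fun k => / (y + INR k) ^ s).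
Proof.
  intros y s Hy Hs. apply (@ex_series_le R_AbsRing R_CompleteNormedModule _ (fun k => / (Rmin y 1) ^ s / (INR k + 1) ^ 2)); [|apply ex_C_inv_sq].
  intros k. change norm with Rabs; simpl. pose proof (pos_INR k).
  rewrite Rabs_right by (left; apply Rinv_0_lt_compat, pow_lt; lra).
  apply (inv_pow_bound y); auto; lra.
Qed.

Definition psi (y : R) := cst - Series (fun k => uu k y).

Lemma lG_derive : forall x, 0 < x -> is_derive lG x (psi x).
Proof.
  intros x Hx. apply is_derive_Reals.
  set (d := mkposreal (x / 2) ltac:(lra)).
  assert (HB : forall y, Boule x d y -> x / 2 <= y <= 3 * x / 2).
  { intros y Hy. unfold Boule in Hy; simpl in Hy. apply Rabs_def2 in Hy. lra. }
  apply (CVU_derivable fn (fun n y => dseq n - sum_f_R0 (fun k => uu k y) (S n)) lG psi x d).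
  - intros eps Heps.
    destruct (cst_cv (eps / 2) ltac:(lra)) as [N1 HN1].
    assert (HM := mtest uu (fun k => ((1 + 3 * x / 2) / (Rmin (x / 2) 1 * Rmin (x / 2) 1)) / (INR k + 1) ^ 2) x d
       (fun k y Hy => uu_bound (x / 2) (3 * x / 2) y k ltac:(lra) (HB y Hy)) (ex_C_inv_sq _)).
    destruct (HM (eps / 2) ltac:(lra)) as [N2 HN2].
    exists (max N1 N2). intros n y Hn Hy.
    specialize (HN1 n ltac:(lia)). specialize (HN2 (S n) y ltac:(lia) Hy). unfold R_dist in HN1.
    unfold psi. cbv beta in HN2.
    replace (cst - Series (fun k => uu k y) - (dseq n - sum_f_R0 (fun k => uu k y) (S n)))
      with (- (dseq n - cst) - (Series (fun k => uu k y) - sum_f_R0 (fun k => uu k y) (S n))) by ring.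
    eapply Rle_lt_trans; [apply Rabs_triang|]. rewrite Rabs_Ropp, Rabs_Ropp. lra.
  - intros y Hy. apply fn_cv. specialize (HB y Hy). lra.
  - intros n y Hy. specialize (HB y Hy). apply is_derive_Reals.
    replace (dseq n - sum_f_R0 (fun k => uu k y) (S n)) with (ln (INR n + 1) - sum_f_R0 (fun k => / (y + INR k)) (S n)).
    + apply fn_derive; lra.
    + unfold dseq, uu. rewrite minus_sum. ring.
  - apply Boule_center.
Qed.

Definition Z (s : nat) (y : R) := Series (fun k => / (y + INR k) ^ s).

Lemma d_invpow : forall a p y, 0 < y + a -> is_derive (fun y => / (y + a) ^ (S p)) y (- INR (S p) * / (y + a) ^ (S (S p))).
Proof.
  intros. assert (0 < (y + a) ^ p) by (apply pow_lt; auto). auto_derive. nra.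
  change (match p with | 0%nat => 1 | S _ => INR p + 1 end) with (INR (S p)).
  simpl pow. field. lra.
Qed.

Lemma psi_derive : forall x, 0 < x -> is_derive psi x (Z 2 x).
Proof.
  intros x Hx. unfold psi, Z.
  set (m := Rmin (x / 2) 1).
  assert (H := td uu (fun k y => - / (y + INR k) ^ 2) x (fun k => / m ^ 2 / (INR k + 1) ^ 2) Hx).
  assert (Hd : is_derive (fun y => Series (fun k => uu k y)) x (Series (fun k => - / (x + INR k) ^ 2))).
  { apply H.
    - intros k y Hy. unfold uu. pose proof (pos_INR k).
      auto_derive. lra. simpl. field. lra.
    - apply ex_uu.
    - apply ex_C_inv_sq.
    - intros k y Hy. pose proof (pos_INR k).
      rewrite Rabs_Ropp, Rabs_right by (left; apply Rinv_0_lt_compat, pow_lt; lra).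
      apply (inv_pow_bound (x / 2)); auto; lra. }
  rewrite Series_opp in Hd.
  replace (Series (fun k => / (x + INR k) ^ 2)) with (0 - - Series (fun k => / (x + INR k) ^ 2)) by ring.
  apply (is_derive_minus (fun _ => cst) (fun y => Series (fun k => uu k y))); auto.
  auto_derive; auto.
Qed.

Lemma Z_derive : forall p x, 0 < x -> (1 <= p)%nat ->
  is_derive (Z (S p)) x (- INR (S p) * Z (S (S p)) x).
Proof.
  intros p x Hx Hp. unfold Z.
  set (m := Rmin (x / 2) 1).
  rewrite <- Series_scal_l.
  apply (td (fun k y => / (y + INR k) ^ (S p)) (fun k y => - INR (S p) * / (y + INR k) ^ (S (S p))) x
           (fun k => (INR (S p) * / m ^ (S (S p))) / (INR k + 1) ^ 2) Hx).
  - intros k y Hy. apply d_invpow. pose proof (pos_INR k). lra.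
  - intros y Hy. apply ex_invpow; auto; lia.
  - apply ex_C_inv_sq.
  - intros k y Hy. pose proof (pos_INR k). pose proof (pos_INR (S p)).
    rewrite Rabs_mult, Rabs_Ropp, Rabs_right by lra.
    rewrite Rabs_right by (left; apply Rinv_0_lt_compat, pow_lt; lra).
    unfold Rdiv. rewrite Rmult_assoc. apply Rmult_le_compat_l; auto.
    apply (inv_pow_bound (x / 2)); auto; lia || lra.
Qed.

Definition Gf (m : nat) (y : R) : R :=
  match m with
  | O => lG y
  | S O => psi y
  | S (S j) => (-1) ^ j * INR (fact (S j)) * Z (S (S j)) y
  end.

Lemma Gf_derive : forall m x, 0 < x -> is_derive (Gf m) x (Gf (S m) x).
Proof.
  intros m x Hx. destruct m as [|[|j]].
  - apply lG_derive; auto.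
  - change (Gf 2 x) with ((-1) ^ 0 * INR (fact 1) * Z 2 x).
    replace ((-1) ^ 0 * INR (fact 1) * Z 2 x) with (Z 2 x) by (simpl; ring).
    apply psi_derive; auto.
  - change (Gf (S (S j))) with (fun y => (-1) ^ j * INR (fact (S j)) * Z (S (S j)) y).
    change (Gf (S (S (S j))) x) with ((-1) ^ (S j) * INR (fact (S (S j))) * Z (S (S (S j))) x).
    replace ((-1) ^ (S j) * INR (fact (S (S j))) * Z (S (S (S j))) x)
      with ((-1) ^ j * INR (fact (S j)) * (- INR (S (S j)) * Z (S (S (S j))) x)).
    + apply is_derive_scal. apply Z_derive; auto; lia.
    + rewrite (fact_simpl (S j)), mult_INR. simpl pow. ring.
Qed.

Lemma Derive_n_Gf : forall m y, 0 < y -> Derive_n (fun y => ln (Gamma y)) m y = Gf m y.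
Proof.
  induction m; intros y Hy.
  - reflexivity.
  - simpl Derive_n. rewrite (Derive_ext_loc _ (Gf m)).
    + apply is_derive_unique. apply Gf_derive; auto.
    + exists (mkposreal y Hy). intros t Ht. apply IHm.
      unfold ball in Ht; simpl in Ht; unfold AbsRing_ball, abs, minus, plus, opp in Ht; simpl in Ht.
      apply Rabs_def2 in Ht. lra.
Qed.

Lemma Un_cv_ext : forall u v l, (forall n, u n = v n) -> Un_cv u l -> Un_cv v l.
Proof. intros u v l E H eps Heps. destruct (H eps Heps) as [N HN]. exists N. intros. rewrite <- E. auto. Qed.

Lemma cs_aux : forall (a w : nat -> R) A W N,
  sum_f_R0 (fun k => A * a k * (w k - W) ^ 2) N =
  A * (sum_f_R0 (fun k => a k * w k ^ 2) N - 2 * W * sum_f_R0 (fun k => a k * w k) N + W ^ 2 * sum_f_R0 a N).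
Proof. intros. induction N; cbn [sum_f_R0]; [|rewrite IHN]; ring. Qed.

Lemma cs_fin : forall (a w : nat -> R) N, (forall k, 0 <= a k) ->
  0 <= sum_f_R0 a N * sum_f_R0 (fun k => a k * w k ^ 2) N - sum_f_R0 (fun k => a k * w k) N * sum_f_R0 (fun k => a k * w k) N.
Proof.
  intros a w N Ha. induction N.
  - cbn [sum_f_R0]. right. ring.
  - cbn [sum_f_R0].
    assert (0 <= sum_f_R0 (fun k => a (S N) * a k * (w k - w (S N)) ^ 2) N).
    { apply cond_pos_sum. intros k. apply Rmult_le_pos. apply Rmult_le_pos; auto. apply pow2_ge_0. }
    rewrite cs_aux in H. nra.
Qed.

Lemma Z_cv : forall s y, 0 < y -> (2 <= s)%nat -> Un_cv (fun N => sum_f_R0 (fun k => / (y + INR k) ^ s) N) (Z s y).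
Proof. intros. apply series_cv. apply ex_invpow; auto. Qed.

Lemma const_cv : forall c, Un_cv (fun _ => c) c.
Proof. intros c eps He. exists 0%nat. intros. unfold R_dist. rewrite Rminus_diag, Rabs_R0. auto. Qed.

Lemma Z_cs : forall s y, 0 < y -> (2 <= s)%nat -> Z (S s) y * Z (S s) y <= Z s y * Z (S (S s)) y.
Proof.
  intros s y Hy Hs.
  set (a := fun k => / (y + INR k) ^ s). set (w := fun k => / (y + INR k)).
  assert (Hpos : forall k, 0 < y + INR k) by (intros; pose proof (pos_INR k); lra).
  assert (E1 : forall N, sum_f_R0 (fun k => a k * w k) N = sum_f_R0 (fun k => / (y + INR k) ^ (S s)) N).
  { intros. apply sum_eq. intros i _. unfold a, w. simpl pow. specialize (Hpos i).
    assert (0 < (y + INR i) ^ s) by (apply pow_lt; auto). field. lra. }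
  assert (E2 : forall N, sum_f_R0 (fun k => a k * w k ^ 2) N = sum_f_R0 (fun k => / (y + INR k) ^ (S (S s))) N).
  { intros. apply sum_eq. intros i _. unfold a, w. simpl pow. specialize (Hpos i).
    assert (0 < (y + INR i) ^ s) by (apply pow_lt; auto). field. lra. }
  assert (CA := Z_cv s y Hy Hs). fold a in CA.
  assert (CB := Z_cv (S s) y Hy ltac:(lia)).
  assert (CC := Z_cv (S (S s)) y Hy ltac:(lia)).
  apply (Un_cv_ext _ _ _ (fun N => eq_sym (E1 N))) in CB.
  apply (Un_cv_ext _ _ _ (fun N => eq_sym (E2 N))) in CC.
  assert (L := CV_minus _ _ _ _ (CV_mult _ _ _ _ CA CC) (CV_mult _ _ _ _ CB CB)).
  assert (0 <= Z s y * Z (S (S s)) y - Z (S s) y * Z (S s) y).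
  { eapply Rle_cv_lim; [ | apply const_cv | exact L]. intros N. cbv beta.
    apply cs_fin. intros k. unfold a. left. apply Rinv_0_lt_compat, pow_lt, Hpos. }
  lra.
Qed.

Lemma Z_pos : forall s y, 0 < y -> (2 <= s)%nat -> 0 < Z s y.
Proof.
  intros s y Hy Hs.
  assert (H0 : 0 < / (y + INR 0) ^ s) by (apply Rinv_0_lt_compat, pow_lt; simpl; lra).
  apply Rlt_le_trans with (/ (y + INR 0) ^ s); auto.
  eapply Rle_cv_lim; [ | apply const_cv | apply (Z_cv s y Hy Hs)].
  intros N. cbv beta. induction N.
  - cbn [sum_f_R0]. lra.
  - cbn [sum_f_R0]. pose proof (pos_INR (S N)).
    assert (0 < / (y + INR (S N)) ^ s) by (apply Rinv_0_lt_compat, pow_lt; lra). lra.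
Qed.

Lemma Q_decr : forall p a b, (1 <= p)%nat -> 0 < a -> a < b ->
  Z (S (S p)) b / Z (S p) b < Z (S (S p)) a / Z (S p) a.
Proof.
  intros p a b Hp Ha Hab.
  set (dQ := fun y => ((- INR (S (S p)) * Z (S (S (S p))) y) * Z (S p) y - Z (S (S p)) y * (- INR (S p) * Z (S (S p)) y)) / (Z (S p) y) ^ 2).
  assert (HD : forall y, 0 < y -> is_derive (fun y => Z (S (S p)) y / Z (S p) y) y (dQ y)).
  { intros y Hy. apply is_derive_div.
    - apply Z_derive; auto.
    - apply Z_derive; auto.
    - apply Rgt_not_eq, Z_pos; auto; lia. }
  destruct (MVT_gen (fun y => Z (S (S p)) y / Z (S p) y) a b dQ) as [c [Hc Heq]].
  - intros y Hy. rewrite Rmin_left, Rmax_right in Hy by lra. apply HD. lra.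
  - intros y Hy. rewrite Rmin_left, Rmax_right in Hy by lra. apply continuity_pt_filterlim.
    apply (ex_derive_continuous (fun y => Z (S (S p)) y / Z (S p) y)). eexists; apply HD; lra.
  - rewrite Rmin_left, Rmax_right in Hc by lra.
    assert (Hc0 : 0 < c) by lra.
    assert (dQ c < 0).
    { unfold dQ. pose proof (Z_pos (S p) c Hc0 ltac:(lia)). pose proof (Z_pos (S (S p)) c Hc0 ltac:(lia)).
      pose proof (Z_pos (S (S (S p))) c Hc0 ltac:(lia)).
      pose proof (Z_cs (S p) c Hc0 ltac:(lia)).
      rewrite !S_INR. pose proof (pos_INR p).
      assert (Hn : (- (INR p + 1 + 1) * Z (S (S (S p))) c) * Z (S p) c - Z (S (S p)) c * (- (INR p + 1) * Z (S (S p)) c) < 0).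
      { assert (0 < Z (S p) c * Z (S (S (S p))) c) by (apply Rmult_lt_0_compat; auto). nra. }
      unfold Rdiv. assert (0 < / Z (S p) c ^ 2) by (apply Rinv_0_lt_compat, pow_lt; auto). nra. }
    assert (dQ c * (b - a) < 0) by (apply Rmult_neg_pos; lra) || nra.
    lra.
Qed.

Theorem lemmaC1 : forall (n : nat), (1 <= n)%nat ->
  forall a b : R, 0 < a -> a < b ->
    polygamma (S n) a / polygamma n a < polygamma (S n) b / polygamma n b.
Proof.
  intros n Hn a b Ha Hab. destruct n as [|j]; [lia|].
  unfold polygamma. rewrite !Derive_n_Gf by lra.
  assert (Hr : forall y, 0 < y -> Gf (S (S (S j))) y / Gf (S (S j)) y = - INR (S (S j)) * (Z (S (S (S j))) y / Z (S (S j)) y)).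
  { intros y Hy. change (Gf (S (S (S j))) y) with ((-1) ^ (S j) * INR (fact (S (S j))) * Z (S (S (S j))) y).
    change (Gf (S (S j)) y) with ((-1) ^ j * INR (fact (S j)) * Z (S (S j)) y).
    rewrite (fact_simpl (S j)), mult_INR. simpl pow.
    assert ((-1) ^ j <> 0) by (apply pow_nonzero; lra).
    assert (INR (fact (S j)) <> 0) by apply INR_fact_neq_0.
    assert (Z (S (S j)) y <> 0) by (apply Rgt_not_eq, Z_pos; auto; lia).
    field. auto. }
  rewrite !Hr by lra.
  pose proof (Q_decr (S j) a b ltac:(lia) Ha Hab).
  assert (0 < INR (S (S j))) by (apply lt_0_INR; lia).
  nra.
Qed.
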